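(* Let $a,b$ be positive integers and $r=[2a,2b,-2b,-2a]$. Then all zeros of $\Delta_{K(r)}(t)$ are real if and only if $a\ge 4b$.
   Context: For a finite sequence $r=[2a_1,2a_2,\dots,2a_n]$ of nonzero even integers, $K(r)$ denotes the 2-bridge knot or link whose associated rational number has the even continued fraction expansion $1/(2a_1-1/(2a_2-\cdots-1/(2a_n)))$ ($K(r)$ is a knot if $n$ is even and a 2-component link if $n$ is odd). Let $M(r)$ be the $n\times n$ integer matrix whose $(k,k)$-entry is $a_k$ ($1\le k\le n$), whose $(k,k+1)$-entry is $1$ ($1\le k\le n-1$), and whose other entries are $0$; it is a Seifert matrix of $K(r)$, and $\Delta_{K(r)}(t)=\det(tM(r)-M(r)^T)$ is the (reduced) Alexander polynomial of $K(r)$ (well defined up to sign). *)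

(* Defs.v *)
From HB Require Import structures.
From mathcomp Require Import all_boot all_order all_algebra all_field.
Set Implicit Arguments. Unset Strict Implicit. Unset Printing Implicit Defensive.
Import Order.TTheory GRing.Theory Num.Theory.
Local Open Scope ring_scope.

(* r = [2a_1; ...; 2a_n] : the sequence of (nonzero even) integers of the
   even continued fraction.  a_k = r_k / 2. *)
Definition half_entry (r : seq int) (k : nat) : int := ((r`_k) %/ 2)%Z.

Definition seifert_mx (r : seq int) : 'M[int]_(size r) :=
  \matrix_(i < size r, j < size r)
    (if (j == i :> nat) then half_entry r i
     else if (j == i.+1 :> nat) then 1 else 0).

Definition alexander (r : seq int) : {poly int} :=
  \det ('X *: map_mx polyC (seifert_mx r) - map_mx polyC (seifert_mx r)^T).

Definition all_zeros_real (p : {poly int}) : Prop :=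
  forall z : algC, root (map_poly intr p) z -> z \is Num.real.

(* Main.v *)
Require Import Defs.
From HB Require Import structures.
From mathcomp Require Import all_boot all_order all_algebra all_field.
From mathcomp Require Import ring.
Import Order.TTheory GRing.Theory Num.Theory.
Local Open Scope ring_scope.

Lemma det_tri4 (R : comRingType) (f : nat -> nat -> R) :
  f 0 2 = 0 -> f 0 3 = 0 -> f 1 3 = 0 -> f 2 0 = 0 -> f 3 0 = 0 -> f 3 1 = 0 ->
  \det (\matrix_(i < 4, j < 4) f i j) =
  f 3 3 * (f 2 2 * (f 0 0 * f 1 1 - f 0 1 * f 1 0) - f 1 2 * f 2 1 * f 0 0)
  - f 2 3 * f 3 2 * (f 0 0 * f 1 1 - f 0 1 * f 1 0).
Proof.
move=> h1 h2 h3 h4 h5 h6.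
rewrite (expand_det_row _ 0) !big_ord_recl big_ord0 /cofactor.
rewrite !(expand_det_row _ 0) !big_ord_recl !big_ord0 /cofactor.
rewrite !(expand_det_row _ 0) !big_ord_recl !big_ord0 /cofactor.
rewrite !det_mx11 !mxE /bump /=.
rewrite h1 h2 h3 h4 h5 h6.
ring.
Qed.

Definition mm (a b : int) (i j : nat) : int :=
  if j == i then [:: a; b; -b; -a]`_i else if j == i.+1 then 1 else 0.
Definition gg (a b : int) (i j : nat) : {poly int} :=
  'X * (mm a b i j)%:P - (mm a b j i)%:P.

Lemma alexE (a b : int) :
  alexander [:: 2 * a; 2 * b; - (2 * b); - (2 * a)] =
  \det (\matrix_(i < 4, j < 4) gg a b i j).
Proof.
rewrite /alexander; congr (\det _); apply/matrixP => i j.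
rewrite !mxE /gg /mm /half_entry.
have E : forall k : nat, ((([:: 2 * a; 2 * b; - (2 * b); - (2 * a)]`_k) %/ 2)%Z
   = [:: a; b; -b; -a]`_k).
  case=> [|[|[|[|k]]]] /=; rewrite ?div0z ?mulKz //. all: try by rewrite -mulrN mulKz.
  by rewrite nth_nil div0z.
by rewrite !E.
Qed.

Lemma alexQ (a b : int) :
  alexander [:: 2 * a; 2 * b; - (2 * b); - (2 * a)] =
  (a%:P)^+2 * (b%:P)^+2 * ('X - 1)^+4 + (2%:R * a%:P * b%:P - (a%:P)^+2) * ('X - 1)^+2 * 'X + 'X ^+ 2.
Proof.
rewrite alexE det_tri4; last first.
  1-6: by rewrite /gg /mm /= polyC0 mulr0 subr0.
rewrite /gg /mm /= !polyCN polyC1 polyC0.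
rewrite !mulr1 !mulr0 !subr0 !sub0r.
move: (a%:P) (b%:P) ('X : {poly int}).
have H : forall A B X : {poly int}, (X * - A - - A) *
  ((X * - B - - B) * ((X * A - A) * (X * B - B) - X * -1) -
   X * -1 * (X * A - A)) -
  X * -1 * ((X * A - A) * (X * B - B) - X * -1) =
  A ^+ 2 * B ^+ 2 * (X - 1) ^+ 4 + (2 * A * B - A ^+ 2) * (X - 1) ^+ 2 * X +
  X ^+ 2 by move=> A B X; ring.
exact: H.
Qed.

Definition EE (a b : int) (z : algC) : algC :=
  (a%:~R)^+2 * (b%:~R)^+2 * (z-1)^+4 + (2 * a%:~R * b%:~R - (a%:~R)^+2) * (z-1)^+2 * z + z^+2.

Lemma evalE (a b : int) (z : algC) :
  (map_poly intr (alexander [:: 2 * a; 2 * b; - (2 * b); - (2 * a)])).[z] = EE a b z.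
Proof.
have kC : forall c : int, (map_poly intr c%:P).[z] = c%:~R :> algC.
  by move=> c; rewrite map_polyC hornerC.
have kX : (map_poly (intr : int -> algC) 'X).[z] = z.
  by rewrite map_polyX hornerX.
rewrite alexQ !(rmorphD, rmorphN, rmorphB, rmorphM, rmorphXn, rmorph1, rmorph_nat).
rewrite !(hornerD, hornerN, hornerM, horner_exp, hornerC, hornerX, hornerMn) !kC !kX /EE.
ring.
Qed.
From mathcomp Require Import zify.
Lemma sq_real (w d : algC) : 0 <= d -> w ^+ 2 = d -> w \is Num.real.
Proof.
move=> d0 e.
have s0 : 0 <= sqrtC d by rewrite sqrtC_ge0.
have : (w - sqrtC d) * (w + sqrtC d) == 0.
  by rewrite -subr_sqr sqrtCK e subrr.
rewrite mulf_eq0 => /orP[].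
  by rewrite subr_eq0 => /eqP ->; apply: ger0_real.
by rewrite addr_eq0 => /eqP ->; rewrite realN; apply: ger0_real.
Qed.

Lemma EE_ne0 (a b : int) (z : algC) : 0 < a -> 0 < b -> EE a b z = 0 -> z != 0.
Proof.
move=> ha hb E0; apply/eqP => z0; move: E0; rewrite z0.
have -> : EE a b 0 = (a * b)%:~R ^+ 2.
  by rewrite /EE rmorphM /=; ring.
by apply/eqP; rewrite expf_eq0 /= intr_eq0; lia.
Qed.

Lemma EE_ne1 (a b : int) : 0 < a -> 0 < b -> EE a b 0 != EE a b (-1).
Proof.
move=> ha hb.
have -> : EE a b 0 = (a^+2 * b^+2)%:~R by rewrite /EE rmorphM !rmorphXn /=; ring.
have -> : EE a b (-1) = (16 * a^+2 * b^+2 - 8 * a * b + 4 * a^+2 + 1)%:~R.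
  rewrite /EE !(rmorphD, rmorphB, rmorphM, rmorphXn, rmorph1, rmorph_nat) /=; ring.
rewrite eqr_int; apply/eqP; nia.
Qed.

Lemma v_id (a b : int) (z : algC) :
  let A := (a%:~R)^+2 * (b%:~R)^+2 : algC in
  let B := 2 * a%:~R * b%:~R - (a%:~R)^+2 : algC in
  (2 * A * (z - 1)^+2 + B * z)^+2 = (B^+2 - 4 * A) * z^+2 + 4 * A * EE a b z.
Proof. rewrite /EE /=; ring. Qed.

Theorem proposition8p3 (a b : int) (ha : 0 < a) (hb : 0 < b) :
  all_zeros_real (alexander [:: 2 * a; 2 * b; - (2 * b); - (2 * a)]) <->
  4 * b <= a.
Proof.
set A : algC := (a%:~R)^+2 * (b%:~R)^+2.
set B : algC := 2 * a%:~R * b%:~R - (a%:~R)^+2.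
set D : algC := B^+2 - 4 * A.
have AE : A = (a^+2 * b^+2)%:~R by rewrite /A rmorphM !rmorphXn.
have BE : B = (2 * a * b - a^+2)%:~R.
  by rewrite /B !(rmorphB, rmorphM, rmorphXn, rmorph_nat).
have DE : D = (a^+3 * (a - 4 * b))%:~R.
  rewrite /D AE BE !(rmorphB, rmorphM, rmorphXn, rmorph_nat) /=; ring.
have A0 : 0 < A by rewrite AE ltr0z; nia.
have Areal : A \is Num.real by rewrite AE realz.
have Breal : B \is Num.real by rewrite BE realz.
split.
- move=> H; rewrite leNgt; apply/negP => lt.
  have D0 : D < 0 by rewrite DE ltrz0; nia.
  pose p : {poly algC} := map_poly intr (alexander [:: 2 * a; 2 * b; - (2 * b); - (2 * a)]).
  have [z rz] : exists z, root p z.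
    apply/closed_rootP; apply/negP => /eqP s1.
    have pc := size1_polyC (eq_leq s1).
    have := EE_ne1 a b ha hb.
    by rewrite -!evalE -/p pc !hornerC eqxx.
  have zr := H z rz.
  move: rz; rewrite /root /p evalE => /eqP E0.
  have z0 := @EE_ne0 a b z ha hb E0.
  have := v_id a b z; rewrite /= -/A -/B -/D E0 mulr0 addr0 => vE.
  have vr : 2 * A * (z - 1)^+2 + B * z \is Num.real.
    by rewrite !(rpredD, rpredM, rpredX, rpredB, rpredN, rpred1, rpred_nat, realz); try exact: zr.
  have v2 := real_exprn_even_ge0 (n := 2) vr isT.
  have z2 : 0 < z ^+ 2 by rewrite real_exprn_even_gt0 // z0 orbT.
  have : D * z ^+ 2 < 0 by rewrite nmulr_rlt0.
  by rewrite -vE => h; have := le_lt_trans v2 h; rewrite ltxx.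
- move=> h4 z; rewrite /root evalE => /eqP E0.
  have z0 := @EE_ne0 a b z ha hb E0.
  have D0 : 0 <= D by rewrite DE ler0z; nia.
  have B0 : B < 0 by rewrite BE ltrz0; nia.
  have := v_id a b z; rewrite /= -/A -/B -/D E0 mulr0 addr0 => vE.
  set v := 2 * A * (z - 1)^+2 + B * z in vE.
  set w := v / z.
  have w2 : w ^+ 2 = D by rewrite /w exprMn vE exprVn mulfK // expf_neq0.
  have wr : w \is Num.real by apply: sq_real D0 w2.
  set c := w - B.
  have cr : c \is Num.real by rewrite rpredB.
  have cE : c ^+ 2 + 2 * B * c + 4 * A = 0.
    have -> : c ^+ 2 + 2 * B * c + 4 * A = w ^+ 2 - D by rewrite /c /D; ring.
    by rewrite w2 subrr.
  have c0 : 0 <= c.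
    rewrite real_leNgt ?rpred0 //; apply/negP => cn.
    have : 0 < c ^+ 2 + 2 * B * c + 4 * A.
      apply: addr_gt0; last by rewrite mulr_gt0 // ltr0n.
      apply: addr_gt0; first by rewrite expr2 nmulr_rgt0.
      by rewrite nmulr_rgt0 // pmulr_rlt0 // ltr0n.
    by rewrite cE ltxx.
  have vw : v = w * z by rewrite /w divfK.
  have rel : 2 * A * (z - 1) ^+ 2 = c * z.
    apply/eqP; rewrite -subr_eq0; apply/eqP.
    have -> : 2 * A * (z - 1) ^+ 2 - c * z = v - w * z by rewrite /v /c; ring.
    by rewrite vw subrr.
  set y := 4 * A * (z - 1) - c.
  have y2 : y ^+ 2 = c ^+ 2 + 8 * A * c.
    apply/eqP; rewrite -subr_eq0; apply/eqP.
    have -> : y ^+ 2 - (c ^+ 2 + 8 * A * c) = 8 * A * (2 * A * (z - 1) ^+ 2 - c * z)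
      by rewrite /y; ring.
    by rewrite rel subrr mulr0.
  have yr : y \is Num.real.
    apply: sq_real y2; apply: addr_ge0.
      exact: real_exprn_even_ge0.
    by rewrite mulr_ge0 // mulr_ge0 // ?ler0n // ltW.
  have A4 : 4 * A != 0 by rewrite mulf_neq0 // ?pnatr_eq0 // gt_eqF.
  have -> : z = (y + c) / (4 * A) + 1.
    by rewrite /y subrK mulrC mulKf // subrK.
  apply: rpredD; last exact: rpred1.
  apply: rpredM; first exact: rpredD yr cr.
  by rewrite realV; apply: rpredM; [exact: rpred_nat | exact: Areal].
Qed.
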